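(* Consider a parameter-dependent flow on the strip $[x_-,x_+]\times\mathbb R$ satisfying all the standing assumptions in the context, including the monotonicity assumption (M). Fix a solution $x(\tau)$ of $\dot x=f(x)$ with values in $(x_-,x_+)$, and for $\mu\in I$ write the distinguished orbits as $\widetilde{\mathcal W}^\pm_\mu=\{(x(\tau),y^\pm_\mu(\tau)):\tau\in\mathbb R\}$. Then $y^\pm_\mu$ are monotone in $\mu$: if $\mu_1<\mu_2$ then $y^-_{\mu_1}(\tau)\ge y^-_{\mu_2}(\tau)$ and $y^+_{\mu_1}(\tau)\le y^+_{\mu_2}(\tau)$ for all $\tau\in\mathbb R$.
   Context: Let $x_-<x_+$ and consider on the strip $[x_-,x_+]\times\mathbb R$ (universal cover of the cylinder $[x_-,x_+]\times\mathbb S^1$, $\mathbb S^1=\mathbb R/2\pi\mathbb Z$) the family of systems $\dot x=f(x)$, $\dot y=g_\mu(x,y)$, with parameter $\mu$ in an open interval $I\subset\mathbb R$; $f$ is smooth, $g_\mu(x,y)$ is smooth in $(x,y)$, $C^1$ in $\mu$, and $2\pi$-periodic in $y$. Assume $f(x_\pm)=0$, $f>0$ on $(x_-,x_+)$, $f'(x_-)\ge0$, $f'(x_+)\le0$. For each $\mu$ assume: $g_\mu(x_-,y)=0$ iff $y\equiv s_-$ or $y\equiv n_-$ mod $2\pi$, and $g_\mu(x_+,y)=0$ iff $y\equiv s_+$ or $y\equiv n_+$ mod $2\pi$, where $-\pi\le s_-<n_-\le\pi$, $-\pi\le s_+<n_+\le\pi$ (depending on $\mu$); $\partial_yg_\mu(x_-,n_-)>0$,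 $\partial_yg_\mu(x_-,s_-)<0$, $\partial_yg_\mu(x_+,n_+)<0$, $\partial_yg_\mu(x_+,s_+)>0$; $s_--n_-\equiv n_+-s_+$ mod $2\pi$; and the flow has no non-wandering points other than these boundary equilibria and their $2\pi$-translates. Monotonicity assumption (M): $\partial_\mu g_\mu(x,y)\le0$ for all $(x,y)$ and $\mu$. Let $\tilde S_-=(x_-,s_-)$ and $\tilde S_+=(x_+,s_+)$. The distinguished orbit $\widetilde{\mathcal W}^-_\mu$ is the unique orbit in the open strip whose $\alpha$-limit is $\tilde S_-$, and $\widetilde{\mathcal W}^+_\mu$ the unique orbit whose $\omega$-limit is $\tilde S_+$. *)

(* Defs.v *)
From Stdlib Require Import Reals Lra ZArith.
From Coquelicot Require Import Coquelicot.
Open Scope R_scope.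

Definition smooth1 (f : R -> R) : Prop := forall (n : nat) (x : R), ex_derive_n f n x.

Fixpoint C2k (k : nat) (g : R -> R -> R) : Prop :=
  match k with
  | O => forall x y, continuity_2d_pt g x y
  | S k' => (forall x y, continuity_2d_pt g x y) /\
            exists gx gy : R -> R -> R,
              (forall x y, is_derive (fun t => g t y) x (gx x y)) /\
              (forall x y, is_derive (fun t => g x t) y (gy x y)) /\
              C2k k' gx /\ C2k k' gy
  end.

Definition smooth2 (g : R -> R -> R) : Prop := forall k, C2k k g.

Definition cong2pi (y a : R) : Prop := exists k : Z, y = a + 2 * IZR k * PI.

Definition is_sol (xm xp : R) (f : R -> R) (g : R -> R -> R) (X Y : R -> R) : Prop :=
  forall t, xm <= X t <= xp /\
            is_derive X t (f (X t)) /\ is_derive Y t (g (X t) (Y t)).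

Definition nonwandering (xm xp : R) (f : R -> R) (g : R -> R -> R) (px py : R) : Prop :=
  forall eps T : R, 0 < eps ->
    exists (X Y : R -> R) (t : R),
      is_sol xm xp f g X Y /\ T <= t /\
      Rabs (X 0 - px) < eps /\ Rabs (Y 0 - py) < eps /\
      Rabs (X t - px) < eps /\ Rabs (Y t - py) < eps.

Definition in_alpha_limit (X Y : R -> R) (px py : R) : Prop :=
  forall eps T : R, 0 < eps -> exists t, t <= T /\
    Rabs (X t - px) < eps /\ Rabs (Y t - py) < eps.

Definition in_omega_limit (X Y : R -> R) (px py : R) : Prop :=
  forall eps T : R, 0 < eps -> exists t, T <= t /\
    Rabs (X t - px) < eps /\ Rabs (Y t - py) < eps.

Definition inI (a b : Rbar) (mu : R) : Prop := Rbar_lt a (Finite mu) /\ Rbar_lt (Finite mu) b.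

(* Main.v *)
Require Import Defs.
From Stdlib Require Import Reals ZArith Lra Lia Classical.
From Coquelicot Require Import Coquelicot.
Open Scope R_scope.
Lemma der_cont f x d : is_derive f x d -> continuity_pt f x.
Proof.
  intro H. apply continuity_pt_filterlim.
  apply (ex_derive_continuous f x). exists d; exact H.
Qed.
Lemma cont_eps f x : continuity_pt f x -> forall e, 0 < e ->
  exists d, 0 < d /\ forall y, Rabs (y - x) < d -> Rabs (f y - f x) < e.
Proof.
  intros Hc e He. destruct (proj1 (continuity_pt_locally f x) Hc (mkposreal e He)) as [d Hd].
  exists d. split. apply cond_pos. intros y Hy. apply (Hd y). exact Hy.
Qed.
Lemma der_mono f df a b : a <= b ->
  (forall t, a <= t <= b -> is_derive f t (df t)) ->
  (forall t, a <= t <= b -> 0 <= df t) -> f a <= f b.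
Proof.
  intros Hab Hd Hs.
  destruct (MVT_gen f a b df) as [c [Hc Heq]].
  - intros x Hx. apply Hd. rewrite Rmin_left in Hx by lra. rewrite Rmax_right in Hx by lra. lra.
  - intros x Hx. rewrite Rmin_left in Hx by lra. rewrite Rmax_right in Hx by lra. apply der_cont with (df x). apply Hd; lra.
  - rewrite Rmin_left in Hc by lra. rewrite Rmax_right in Hc by lra.
    assert (0 <= df c * (b - a)) by (apply Rmult_le_pos; [apply Hs; lra| lra]). lra.
Qed.
Lemma der_anti f df a b : a <= b ->
  (forall t, a <= t <= b -> is_derive f t (df t)) ->
  (forall t, a <= t <= b -> df t <= 0) -> f b <= f a.
Proof.
  intros Hab Hd Hs.
  assert (- f a <= - f b); [|lra].
  apply (der_mono (fun t => - f t) (fun t => - df t)); auto.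
  - intros t Ht. apply (is_derive_opp f t (df t)). auto.
  - intros t Ht. specialize (Hs t Ht). lra.
Qed.

Lemma right_neg (h : R -> R) (a d : R) : is_derive h a d -> d < 0 -> h a = 0 ->
  exists del, 0 < del /\ forall t, 0 < t < del -> h (a + t) < 0.
Proof.
  intros Hd Hn H0. apply is_derive_Reals in Hd.
  destruct (Hd (- d / 2)) as [del Hdel]. lra.
  exists del. split. apply cond_pos. intros t Ht.
  assert (Ha : Rabs t < del) by (rewrite Rabs_right; lra).
  specialize (Hdel t ltac:(lra) Ha). rewrite H0 in Hdel.
  apply Rabs_def2 in Hdel. destruct Hdel as [H2 _].
  rewrite Rminus_0_r in H2. assert (h (a + t) / t < 0) by lra.
  assert (h (a+t) = (h (a+t) / t) * t) by (field; lra).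
  rewrite H1. apply Rmult_neg_pos; lra. 
Qed.
Lemma sign_neg (h : R -> R) (a b d : R) : a < b -> (forall y, continuity_pt h y) ->
  h a = 0 -> is_derive h a d -> d < 0 -> (forall y, a < y < b -> h y <> 0) ->
  forall y, a < y < b -> h y < 0.
Proof.
  intros Hab Hc H0 Hd Hn Hz y Hy.
  destruct (Rlt_or_le (h y) 0) as [|Hge]; [assumption|exfalso].
  destruct (right_neg h a d Hd Hn H0) as [del [Hdel Hr]].
  set (p := a + Rmin (del/2) ((y - a)/2)).
  assert (Hm1 : Rmin (del/2) ((y-a)/2) <= del/2) by apply Rmin_l.
  assert (Hm2 : Rmin (del/2) ((y-a)/2) <= (y-a)/2) by apply Rmin_r.
  assert (Hm3 : 0 < Rmin (del/2) ((y-a)/2)) by (apply Rmin_glb_lt; lra).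
  assert (Hp : h p < 0) by (apply Hr; lra).
  destruct (IVT_gen h p y 0 Hc) as [z [Hz1 Hz2]].
  - rewrite Rmin_left by lra. rewrite Rmax_right by lra. lra.
  - rewrite Rmin_left in Hz1 by (unfold p; lra). rewrite Rmax_right in Hz1 by (unfold p; lra).
    apply (Hz z); [unfold p in Hz1; lra | exact Hz2].
Qed.
Lemma cong_eq y a : cong2pi y a -> Rabs (y - a) < 2 * PI -> y = a.
Proof.
  intros [k Hk] Ha. subst y. destruct (Z.eq_dec k 0) as [->|Hk].
  - simpl. ring.
  - exfalso. assert (HP := PI_RGT_0).
    replace (a + 2 * IZR k * PI - a) with (IZR k * (2 * PI)) in Ha by ring.
    rewrite Rabs_mult in Ha. rewrite (Rabs_right (2*PI)) in Ha by lra.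
    assert (1 <= Rabs (IZR k)).
    { destruct (Z_lt_le_dec k 0).
      - rewrite Rabs_left. assert (IZR k <= -1) by (apply IZR_le; lia). lra. apply IZR_lt; lia.
      - rewrite Rabs_right. apply IZR_le; lia. apply Rle_ge, IZR_le; lia. }
    nra.
Qed.
Lemma core (G1 G2 : R -> R -> R) (X y1 y2 : R -> R) (xa xb x0 s1 s2 n1 c2 : R) :
  (forall t, continuity_pt X t) ->
  (forall t, xa <= X t <= xb) -> xa <= x0 <= xb ->
  (forall t, is_derive y1 t (G1 (X t) (y1 t))) ->
  (forall t, is_derive y2 t (G2 (X t) (y2 t))) ->
  (forall x y, xa <= x <= xb -> G2 x y <= G1 x y) ->
  (forall x0' y0, exists d L, 0 < d /\ forall x ya yb, Rabs (x - x0') < d ->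
      Rabs (ya - y0) < d -> Rabs (yb - y0) < d ->
      Rabs (G1 x yb - G1 x ya) <= L * Rabs (yb - ya)) ->
  (exists d, 0 < d /\ forall x ya yb, Rabs (x - x0) < d -> Rabs (ya - s1) < d ->
      Rabs (yb - s1) < d -> ya <= yb -> G1 x yb <= G1 x ya) ->
  s1 < n1 -> (forall y, s1 < y < n1 -> G1 x0 y < 0) ->
  (forall y, c2 < y < s2 -> 0 < G2 x0 y) -> c2 < n1 -> G2 x0 s2 = 0 ->
  (forall e, 0 < e -> exists T, forall t, t <= T -> Rabs (X t - x0) < e) ->
  (forall e, 0 < e -> exists T, forall t, t <= T -> Rabs (y1 t - s1) < e) ->
  (forall e, 0 < e -> exists T, forall t, t <= T -> Rabs (y2 t - s2) < e) ->
  forall t, y2 t <= y1 t.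
Proof.
  intros HXc HXr Hx0 Hy1 Hy2 Hcmp HLip HMon Hsn HG1 HG2 Hc2 HG2s HXl Hl1 Hl2 tau0.
  destruct (Rle_or_lt (y2 tau0) (y1 tau0)) as [|Hgt]; [assumption|exfalso].
  set (D := fun t => y2 t - y1 t).
  assert (HD : forall t, is_derive D t (G2 (X t) (y2 t) - G1 (X t) (y1 t))).
  { intro t. apply (is_derive_minus y2 y1 t); auto. }
  assert (HDc : forall t, continuity_pt D t) by (intro t; exact (der_cont _ _ _ (HD t))).
  assert (Hpos : forall t, t <= tau0 -> 0 < D t).
  { intros t1 Ht1. destruct (Rlt_or_le 0 (D t1)) as [|HD1]; [assumption|exfalso].
    set (E := fun t => t1 <= t <= tau0 /\ D t <= 0).
    destruct (completeness E) as [m [Hub Hlub]].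
    { exists tau0. intros t [Ht _]. lra. }
    { exists t1. split; [lra|exact HD1]. }
    assert (Hm1 : t1 <= m) by (apply Hub; split; [lra|exact HD1]).
    assert (Hm2 : m <= tau0) by (apply Hlub; intros t [Ht _]; lra).
    assert (Hright : forall t, m < t <= tau0 -> 0 < D t).
    { intros t Ht. destruct (Rlt_or_le 0 (D t)) as [|Hle]; [assumption|].
      assert (t <= m) by (apply Hub; split; [lra|exact Hle]). lra. }
    assert (HDtau : 0 < D tau0) by (unfold D; lra).
    assert (HDm1 : D m <= 0).
    { destruct (Rle_or_lt (D m) 0) as [|Hp]; [assumption|exfalso].
      destruct (cont_eps D m (HDc m) (D m) Hp) as [del [Hdel Hc]].
      destruct (classic (exists t, E t /\ m - del < t)) as [[t [[Ht HDt] Ht2]]|Hno].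
      - assert (t <= m) by (apply Hub; split; assumption).
        specialize (Hc t ltac:(apply Rabs_def1; lra)). apply Rabs_def2 in Hc. lra.
      - assert (m <= m - del/2); [|lra].
        apply Hlub. intros t Et. destruct (Rle_or_lt t (m - del/2)) as [|Hlt]; [assumption|].
        exfalso. apply Hno. exists t. split; [exact Et|lra]. }
    assert (Hmlt : m < tau0) by (destruct (Rle_lt_or_eq_dec m tau0 Hm2); [assumption|subst m; lra]).
    assert (HDm : D m = 0).
    { destruct (Rle_lt_or_eq_dec _ _ HDm1) as [Hn|]; [exfalso|assumption].
      destruct (cont_eps D m (HDc m) (- D m) ltac:(lra)) as [del [Hdel Hc]].
      set (t := Rmin (m + del/2) tau0).
      assert (Ht1' : m < t) by (apply Rmin_glb_lt; lra).
      assert (Ht2' : t <= tau0) by apply Rmin_r.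
      assert (Ht3 : t <= m + del/2) by apply Rmin_l.
      specialize (Hc t ltac:(apply Rabs_def1; lra)). apply Rabs_def2 in Hc.
      specialize (Hright t ltac:(lra)). lra. }
    assert (Hyeq : y1 m = y2 m) by (unfold D in HDm; lra).
    destruct (HLip (X m) (y1 m)) as [d [L [Hd HL]]].
    set (L' := Rabs L).
    destruct (cont_eps X m (HXc m) d Hd) as [dx [Hdx Hcx]].
    destruct (cont_eps y1 m (der_cont _ _ _ (Hy1 m)) d Hd) as [d1 [Hd1 Hc1]].
    destruct (cont_eps y2 m (der_cont _ _ _ (Hy2 m)) d Hd) as [d2 [Hd2 Hc2']].
    set (del := Rmin dx (Rmin d1 d2)).
    assert (Hdel0 : 0 < del) by (apply Rmin_glb_lt; [lra| apply Rmin_glb_lt; lra]).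
    assert (Hdl1 : del <= dx) by apply Rmin_l.
    assert (Hdl2 : del <= d1) by (eapply Rle_trans; [apply Rmin_r| apply Rmin_l]).
    assert (Hdl3 : del <= d2) by (eapply Rle_trans; [apply Rmin_r| apply Rmin_r]).
    set (t2 := Rmin (m + del/2) tau0).
    assert (Ht21 : m < t2) by (apply Rmin_glb_lt; lra).
    assert (Ht22 : t2 <= tau0) by apply Rmin_r.
    assert (Ht23 : t2 <= m + del/2) by apply Rmin_l.
    set (F := fun t => D t * exp (- L' * t)).
    assert (HF : forall t, m <= t <= t2 -> is_derive F t
       ((G2 (X t) (y2 t) - G1 (X t) (y1 t)) * exp (- L' * t) + D t * (- L' * exp (- L' * t)))).
    { intros t _. unfold F.
      apply (is_derive_mult D (fun t => exp (- L' * t)) t); auto.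
      - auto_derive; [auto|ring].
      - intros; apply Rmult_comm. }
    assert (HFm : F t2 <= F m).
    { apply (der_anti F (fun t => (G2 (X t) (y2 t) - G1 (X t) (y1 t)) * exp (- L' * t) + D t * (- L' * exp (- L' * t))) m t2); [lra|exact HF|].
      intros t Ht.
      assert (HDt : 0 <= D t).
      { destruct (Rle_lt_or_eq_dec _ _ (proj1 Ht)) as [Hlt|<-]; [|lra].
        left. apply Hright. lra. }
      assert (Habs : Rabs (t - m) < del) by (apply Rabs_def1; lra).
      specialize (Hcx t ltac:(lra)). specialize (Hc1 t ltac:(lra)). specialize (Hc2' t ltac:(lra)).
      rewrite <- Hyeq in Hc2'.
      specialize (HL (X t) (y1 t) (y2 t) Hcx Hc1 Hc2').
      assert (Hy21 : Rabs (y2 t - y1 t) = D t) by (assert (H' := HDt); unfold D in H' |- *; apply Rabs_right; lra).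
      rewrite Hy21 in HL.
      assert (HLL : L * D t <= L' * D t) by (apply Rmult_le_compat_r; [lra| apply Rle_abs]).
      assert (Hc12 := Hcmp (X t) (y2 t) (HXr t)).
      assert (Hr := Rle_abs (G1 (X t) (y2 t) - G1 (X t) (y1 t))).
      assert (Hexp := exp_pos (- L' * t)).
      assert (G2 (X t) (y2 t) - G1 (X t) (y1 t) - L' * D t <= 0) by lra.
      replace ((G2 (X t) (y2 t) - G1 (X t) (y1 t)) * exp (- L' * t) + D t * (- L' * exp (- L' * t)))
        with ((G2 (X t) (y2 t) - G1 (X t) (y1 t) - L' * D t) * exp (- L' * t)) by ring.
      apply Rmult_le_0_r; lra. }
    unfold F in HFm. rewrite HDm, Rmult_0_l in HFm.
    assert (0 < D t2 * exp (- L' * t2)); [|lra].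
    apply Rmult_lt_0_compat; [apply Hright; lra| apply exp_pos]. }
  assert (Hs12 : s1 <= s2).
  { destruct (Rle_or_lt s1 s2) as [|Hlt]; [assumption|exfalso].
    destruct (Hl1 ((s1 - s2)/2) ltac:(lra)) as [T1 HT1].
    destruct (Hl2 ((s1 - s2)/2) ltac:(lra)) as [T2 HT2].
    set (t := Rmin (Rmin T1 T2) tau0).
    assert (t <= T1) by (eapply Rle_trans; [apply Rmin_l|apply Rmin_l]).
    assert (t <= T2) by (eapply Rle_trans; [apply Rmin_l|apply Rmin_r]).
    assert (t <= tau0) by apply Rmin_r.
    specialize (HT1 t ltac:(lra)). specialize (HT2 t ltac:(lra)).
    specialize (Hpos t ltac:(lra)). unfold D in Hpos.
    apply Rabs_def2 in HT1. apply Rabs_def2 in HT2. lra. }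
  assert (Hs21 : s2 <= s1).
  { destruct (Rle_or_lt s2 s1) as [|Hlt]; [assumption|exfalso].
    destruct (Rlt_or_le s2 n1) as [Hsn1|Hsn1].
    - specialize (HG1 s2 ltac:(lra)). specialize (Hcmp x0 s2 Hx0). lra.
    - set (y := (Rmax s1 c2 + n1)/2).
      assert (Rmax s1 c2 < n1) by (apply Rmax_lub_lt; lra).
      assert (s1 <= Rmax s1 c2) by apply Rmax_l.
      assert (c2 <= Rmax s1 c2) by apply Rmax_r.
      specialize (HG1 y ltac:(unfold y; lra)). specialize (HG2 y ltac:(unfold y; lra)).
      specialize (Hcmp x0 y Hx0). lra. }
  assert (Hs : s2 = s1) by lra. subst s2.
  destruct HMon as [d [Hd HM]].
  destruct (HXl d Hd) as [TX HTX].
  destruct (Hl1 d Hd) as [T1 HT1].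
  destruct (Hl2 d Hd) as [T2 HT2].
  set (T := Rmin (Rmin TX T1) (Rmin T2 tau0)).
  assert (HTa : T <= TX) by (eapply Rle_trans; [apply Rmin_l|apply Rmin_l]).
  assert (HTb : T <= T1) by (eapply Rle_trans; [apply Rmin_l|apply Rmin_r]).
  assert (HTc : T <= T2) by (eapply Rle_trans; [apply Rmin_r|apply Rmin_l]).
  assert (HTd : T <= tau0) by (eapply Rle_trans; [apply Rmin_r|apply Rmin_r]).
  assert (Hdec : forall t, t <= T -> D T <= D t).
  { intros t Ht. apply (der_anti D (fun t => G2 (X t) (y2 t) - G1 (X t) (y1 t)) t T Ht).
    - intros u _. apply HD.
    - intros u Hu.
      assert (0 < D u) by (apply Hpos; lra). unfold D in H.
      assert (G1 (X u) (y2 u) <= G1 (X u) (y1 u)).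
      { apply HM; [apply HTX|apply HT1|apply HT2|]; lra. }
      specialize (Hcmp (X u) (y2 u) (HXr u)). lra. }
  assert (HDT : 0 < D T) by (apply Hpos; lra).
  destruct (Hl1 (D T / 4) ltac:(lra)) as [T1' HT1'].
  destruct (Hl2 (D T / 4) ltac:(lra)) as [T2' HT2'].
  set (t := Rmin T (Rmin T1' T2')).
  assert (t <= T) by apply Rmin_l.
  assert (t <= T1') by (eapply Rle_trans; [apply Rmin_r|apply Rmin_l]).
  assert (t <= T2') by (eapply Rle_trans; [apply Rmin_r|apply Rmin_r]).
  specialize (HT1' t ltac:(lra)). specialize (HT2' t ltac:(lra)).
  specialize (Hdec t ltac:(lra)).
  apply Rabs_def2 in HT1'. apply Rabs_def2 in HT2'.
  unfold D in *. lra.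
Qed.
Lemma Rabs_opp_sub a b : Rabs (- a - b) = Rabs (a - - b).
Proof. replace (- a - b) with (- (a - - b)) by ring. apply Rabs_Ropp. Qed.

Lemma between_ball a b c y0 d : Rmin a b <= c <= Rmax a b ->
  Rabs (a - y0) < d -> Rabs (b - y0) < d -> Rabs (c - y0) < d.
Proof.
  intros Hc Ha Hb. apply Rabs_def2 in Ha. apply Rabs_def2 in Hb.
  destruct (Rle_or_lt a b) as [Hab|Hab].
  - rewrite Rmin_left in Hc by lra. rewrite Rmax_right in Hc by lra. apply Rabs_def1; lra.
  - rewrite Rmin_right in Hc by lra. rewrite Rmax_left in Hc by lra. apply Rabs_def1; lra.
Qed.

Lemma mvt_y (g : R -> R) (dg : R -> R) ya yb : (forall y, is_derive g y (dg y)) ->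
  exists c, Rmin ya yb <= c <= Rmax ya yb /\ g yb - g ya = dg c * (yb - ya).
Proof.
  intros Hd. apply (MVT_gen g ya yb dg).
  - intros; apply Hd.
  - intros x _. apply (der_cont g x (dg x)). apply Hd.
Qed.

Lemma smooth_gy (G : R -> R -> R) : smooth2 G ->
  exists gy : R -> R -> R, (forall x y, is_derive (fun t => G x t) y (gy x y)) /\
    (forall x y, continuity_2d_pt gy x y).
Proof.
  intros Hs. destruct (Hs 1%nat) as [_ [gx [gy [_ [Hgy [_ Hc]]]]]].
  exists gy. split; [exact Hgy| exact Hc].
Qed.

Lemma loc_lip (G gy : R -> R -> R) :
  (forall x y, is_derive (fun t => G x t) y (gy x y)) ->
  (forall x y, continuity_2d_pt gy x y) ->
  forall x0 y0, exists d L, 0 < d /\ forall x ya yb, Rabs (x - x0) < d ->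
      Rabs (ya - y0) < d -> Rabs (yb - y0) < d ->
      Rabs (G x yb - G x ya) <= L * Rabs (yb - ya).
Proof.
  intros Hd Hc x0 y0. destruct (Hc x0 y0 (mkposreal 1 Rlt_0_1)) as [del Hdel].
  exists del, (Rabs (gy x0 y0) + 1). split; [apply cond_pos|].
  intros x ya yb Hx Ha Hb.
  destruct (mvt_y (fun t => G x t) (gy x) ya yb (Hd x)) as [c [Hc1 Hc2]].
  rewrite Hc2, Rabs_mult. apply Rmult_le_compat_r; [apply Rabs_pos|].
  assert (Hcc := between_ball _ _ _ _ _ Hc1 Ha Hb).
  specialize (Hdel x c Hx Hcc). simpl in Hdel.
  assert (Habs := Rabs_triang_inv (gy x c) (gy x0 y0)). lra.
Qed.

Lemma loc_dec (G gy : R -> R -> R) x0 s :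
  (forall x y, is_derive (fun t => G x t) y (gy x y)) ->
  (forall x y, continuity_2d_pt gy x y) -> gy x0 s < 0 ->
  exists d, 0 < d /\ forall x ya yb, Rabs (x - x0) < d -> Rabs (ya - s) < d ->
      Rabs (yb - s) < d -> ya <= yb -> G x yb <= G x ya.
Proof.
  intros Hd Hc Hn. destruct (Hc x0 s (mkposreal (- gy x0 s) ltac:(lra))) as [del Hdel].
  exists del. split; [apply cond_pos|].
  intros x ya yb Hx Ha Hb Hab.
  destruct (mvt_y (fun t => G x t) (gy x) ya yb (Hd x)) as [c [Hc1 Hc2]].
  assert (Hcc := between_ball _ _ _ _ _ Hc1 Ha Hb).
  specialize (Hdel x c Hx Hcc). simpl in Hdel. apply Rabs_def2 in Hdel.
  assert (gy x c * (yb - ya) <= 0) by (apply Rmult_le_0_r; lra). lra.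
Qed.

Lemma loc_inc (G gy : R -> R -> R) x0 s :
  (forall x y, is_derive (fun t => G x t) y (gy x y)) ->
  (forall x y, continuity_2d_pt gy x y) -> 0 < gy x0 s ->
  exists d, 0 < d /\ forall x ya yb, Rabs (x - x0) < d -> Rabs (ya - s) < d ->
      Rabs (yb - s) < d -> ya <= yb -> G x ya <= G x yb.
Proof.
  intros Hd Hc Hn. destruct (Hc x0 s (mkposreal (gy x0 s) ltac:(lra))) as [del Hdel].
  exists del. split; [apply cond_pos|].
  intros x ya yb Hx Ha Hb Hab.
  destruct (mvt_y (fun t => G x t) (gy x) ya yb (Hd x)) as [c [Hc1 Hc2]].
  assert (Hcc := between_ball _ _ _ _ _ Hc1 Ha Hb).
  specialize (Hdel x c Hx Hcc). simpl in Hdel. apply Rabs_def2 in Hdel.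
  assert (0 <= gy x c * (yb - ya)) by (apply Rmult_le_pos; lra). lra.
Qed.

Lemma alpha_conv (X y : R -> R) xm s :
  (forall t, continuity_pt y t) -> (forall t1 t2, t1 <= t2 -> X t1 <= X t2) ->
  (forall t, xm <= X t) ->
  (forall px py, in_alpha_limit X y px py <-> px = xm /\ py = s) ->
  (forall e, 0 < e -> exists T, forall t, t <= T -> Rabs (X t - xm) < e) /\
  (forall e, 0 < e -> exists T, forall t, t <= T -> Rabs (y t - s) < e).
Proof.
  intros Hyc Hmon Hlow Hch.
  assert (Hin : in_alpha_limit X y xm s) by (apply Hch; auto).
  assert (HX : forall e, 0 < e -> exists T, forall t, t <= T -> Rabs (X t - xm) < e).
  { intros e He. destruct (Hin e 0 He) as [t0 [_ [H1 _]]]. exists t0.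
    intros t Ht. specialize (Hmon t t0 Ht). specialize (Hlow t). apply Rabs_def2 in H1.
    apply Rabs_def1; lra. }
  split; [exact HX|].
  intros e He.
  destruct (classic (exists T, forall t, t <= T -> Rabs (y t - s) < e)) as [|Hn]; [assumption|exfalso].
  assert (Hfar : forall T, exists t, t <= T /\ e <= Rabs (y t - s)).
  { intros T. apply NNPP. intro Hc. apply Hn. exists T. intros t Ht.
    destruct (Rlt_or_le (Rabs (y t - s)) e) as [|Hle]; [assumption|].
    exfalso. apply Hc. exists t. auto. }
  assert (Hk : forall T, exists t, t <= T /\ (y t = s + e \/ y t = s - e)).
  { intros T. destruct (Hfar T) as [t1 [Ht1 Hf]].
    destruct (Hin e t1 He) as [t2 [Ht2 [_ Hy2]]]. apply Rabs_def2 in Hy2.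
    destruct (Rle_or_lt 0 (y t1 - s)) as [Hp|Hp].
    - rewrite Rabs_right in Hf by lra.
      destruct (IVT_gen y t2 t1 (s + e) Hyc) as [z [Hz1 Hz2]].
      + rewrite Rmin_left by lra. rewrite Rmax_right by lra. lra.
      + exists z. rewrite Rmax_right in Hz1 by lra. split; [lra|auto].
    - rewrite Rabs_left in Hf by lra.
      destruct (IVT_gen y t2 t1 (s - e) Hyc) as [z [Hz1 Hz2]].
      + rewrite Rmin_right by lra. rewrite Rmax_left by lra. lra.
      + exists z. rewrite Rmax_right in Hz1 by lra. split; [lra|auto]. }
  assert (Hpt : forall v, (forall T, exists t, t <= T /\ y t = v) -> v = s).
  { intros v Hv. assert (Hal : in_alpha_limit X y xm v).
    { intros eps T Heps. destruct (HX eps Heps) as [TX HTX].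
      destruct (Hv (Rmin T TX)) as [t [Ht Hyt]].
      assert (t <= T) by (eapply Rle_trans; [exact Ht|apply Rmin_l]).
      assert (t <= TX) by (eapply Rle_trans; [exact Ht|apply Rmin_r]).
      exists t. split; [assumption|]. split; [apply HTX; assumption|].
      rewrite Hyt. unfold Rminus. rewrite Rplus_opp_r, Rabs_R0. exact Heps. }
    apply Hch in Hal. tauto. }
  destruct (classic (forall T, exists t, t <= T /\ y t = s + e)) as [Hp|Hp].
  - specialize (Hpt _ Hp). lra.
  - assert (Hq : forall T, exists t, t <= T /\ y t = s - e).
    { apply NNPP. intro Hq. apply Hp. intros T. apply NNPP. intro HT.
      apply Hq. intros T'. destruct (Hk (Rmin T T')) as [t [Ht [Hy|Hy]]].
      - exfalso. apply HT. exists t. split; [eapply Rle_trans; [exact Ht|apply Rmin_l]|exact Hy].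
      - exists t. split; [eapply Rle_trans; [exact Ht|apply Rmin_r]|exact Hy]. }
    specialize (Hpt _ Hq). lra.
Qed.

Lemma nozero (s n y : R) : -PI <= s < n -> n <= PI ->
  (s < y < n \/ n - 2*PI < y < s) -> cong2pi y s \/ cong2pi y n -> False.
Proof.
  intros Hs Hn Hy Hc. assert (HP := PI_RGT_0).
  destruct Hc as [Hc|Hc]; apply cong_eq in Hc.
  - subst y. lra.
  - apply Rabs_def1; lra.
  - subst y. lra.
  - apply Rabs_def1; lra.
Qed.

Lemma neg_on (h dh : R -> R) a b : a < b -> (forall y, is_derive h y (dh y)) ->
  h a = 0 -> dh a < 0 -> (forall y, a < y < b -> h y <> 0) -> forall y, a < y < b -> h y < 0.
Proof.
  intros Hab Hd H0 Hn Hz. apply (sign_neg h a b (dh a)); auto.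
  intro y. apply (der_cont h y (dh y)). apply Hd.
Qed.

Lemma comp_neg (g : R -> R) z l : is_derive g (- z) l -> is_derive (fun z => - g (- z)) z l.
Proof.
  intros H. assert (H2 : is_derive (fun z => g (- z)) z (scal (-1) l)).
  { apply (is_derive_comp g (fun z => - z) z l (-1)). exact H.
    auto_derive; auto. }
  apply (is_derive_ext (fun z => opp (g (- z)))); [reflexivity|].
  replace l with (opp (scal (-1) l)).
  apply (is_derive_opp (fun z => g (- z)) z (scal (-1) l)). exact H2.
  unfold opp, scal; simpl. unfold mult; simpl. ring.
Qed.

Lemma comp_neg2 (g : R -> R) z l : is_derive g (- z) l -> is_derive (fun z => g (- z)) z (- l).
Proof.
  intros H. apply comp_neg in H.
  apply (is_derive_ext (fun z => opp (- g (- z)))).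
  { intro t. unfold opp; simpl. ring. }
  apply (is_derive_opp (fun z => - g (- z)) z l). exact H.
Qed.

Lemma opp_der (g : R -> R) z l : is_derive g z l -> is_derive (fun z => - g z) z (- l).
Proof. intros H. apply (is_derive_opp g z l). exact H. Qed.

Lemma omega_to_alpha (X y : R -> R) xp sp :
  (forall px py, in_omega_limit X y px py <-> px = xp /\ py = sp) ->
  forall px py, in_alpha_limit (fun t => - X (- t)) (fun t => - y (- t)) px py <-> px = - xp /\ py = - sp.
Proof.
  intros Hch px py. split.
  - intros H. assert (Ho : in_omega_limit X y (- px) (- py)).
    { intros eps T He. destruct (H eps (- T) He) as [t [Ht [H1 H2]]].
      exists (- t). split; [lra|]. rewrite Rabs_opp_sub in H1, H2. auto. }
    apply Hch in Ho. lra.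
  - intros [-> ->]. assert (Ho : in_omega_limit X y xp sp) by (apply Hch; auto).
    intros eps T He. destruct (Ho eps (- T) He) as [t [Ht [H1 H2]]].
    exists (- t). split; [lra|]. rewrite !Ropp_involutive.
    replace (- X t - - xp) with (- (X t - xp)) by ring.
    replace (- y t - - sp) with (- (y t - sp)) by ring. rewrite !Rabs_Ropp. auto.
Qed.

Definition LipP (G : R -> R -> R) := forall x0' y0, exists d L, 0 < d /\
  forall x ya yb, Rabs (x - x0') < d -> Rabs (ya - y0) < d -> Rabs (yb - y0) < d ->
      Rabs (G x yb - G x ya) <= L * Rabs (yb - ya).

Lemma lip_neg G : LipP G -> LipP (fun x y => G (- x) (- y)).
Proof.
  intros HL x0 y0. destruct (HL (- x0) (- y0)) as [d [L [Hd H]]].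
  exists d, L. split; [exact Hd|]. intros x ya yb Hx Ha Hb.
  replace (x - x0) with (- (- x - - x0)) in Hx by ring.
  replace (ya - y0) with (- (- ya - - y0)) in Ha by ring.
  replace (yb - y0) with (- (- yb - - y0)) in Hb by ring.
  rewrite Rabs_Ropp in Hx, Ha, Hb.
  specialize (H (- x) (- ya) (- yb) Hx Ha Hb).
  replace (- yb - - ya) with (- (yb - ya)) in H by ring. rewrite Rabs_Ropp in H. exact H.
Qed.

Theorem lemma1
  (xm xp : R) (f : R -> R) (G : R -> R -> R -> R)
  (a b : Rbar) (sm nm sp np : R -> R)
  (* parameter interval I = (a,b), open, possibly unbounded *)
  (Hab : Rbar_lt a b)
  (Hx : xm < xp)
  (* regularity *)
  (Hf : smooth1 f)
  (HGs : forall mu : R, inI a b mu -> smooth2 (G mu))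
  (HGmu : exists Gmu : R -> R -> R -> R,
      forall (mu x y : R), inI a b mu ->
        is_derive (fun m => G m x y) mu (Gmu mu x y) /\
        continuous (fun m => Gmu m x y) mu)
  (Hper : forall mu x y, G mu x (y + 2 * PI) = G mu x y)
  (* assumptions on f *)
  (Hfm : f xm = 0) (Hfp : f xp = 0)
  (Hfpos : forall x, xm < x < xp -> 0 < f x)
  (Hf'm : 0 <= Derive f xm) (Hf'p : Derive f xp <= 0)
  (* boundary equilibria *)
  (Hzm : forall (mu y : R), inI a b mu ->
      (G mu xm y = 0 <-> cong2pi y (sm mu) \/ cong2pi y (nm mu)))
  (Hzp : forall (mu y : R), inI a b mu ->
      (G mu xp y = 0 <-> cong2pi y (sp mu) \/ cong2pi y (np mu)))
  (Hordm : forall mu : R, inI a b mu -> - PI <= sm mu < nm mu /\ nm mu <= PI)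
  (Hordp : forall mu : R, inI a b mu -> - PI <= sp mu < np mu /\ np mu <= PI)
  (Hdnm : forall mu : R, inI a b mu -> 0 < Derive (G mu xm) (nm mu))
  (Hdsm : forall mu : R, inI a b mu -> Derive (G mu xm) (sm mu) < 0)
  (Hdnp : forall mu : R, inI a b mu -> Derive (G mu xp) (np mu) < 0)
  (Hdsp : forall mu : R, inI a b mu -> 0 < Derive (G mu xp) (sp mu))
  (Hcong : forall mu : R, inI a b mu ->
      cong2pi (sm mu - nm mu) (np mu - sp mu))
  (* no other non-wandering points *)
  (Hnw : forall (mu px py : R), inI a b mu ->
      xm <= px <= xp -> nonwandering xm xp f (G mu) px py ->
      (px = xm /\ (cong2pi py (sm mu) \/ cong2pi py (nm mu))) \/
      (px = xp /\ (cong2pi py (sp mu) \/ cong2pi py (np mu))))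
  (* monotonicity assumption (M) *)
  (HM : forall (mu x y : R), inI a b mu -> xm <= x <= xp ->
      Derive (fun m => G m x y) mu <= 0)
  (* a fixed solution x(tau) of x' = f(x) with values in (xm,xp) *)
  (X : R -> R)
  (HX : forall t, xm < X t < xp /\ is_derive X t (f (X t)))
  (mu1 mu2 : R)
  (Hmu1 : inI a b mu1) (Hmu2 : inI a b mu2) (Hlt : mu1 < mu2)
  (* y^-_{mu_i}: the orbit (X, y) has alpha-limit set {(xm, sm mu_i)} *)
  (ym1 ym2 yp1 yp2 : R -> R)
  (Hym1 : is_sol xm xp f (G mu1) X ym1 /\
          forall px py, in_alpha_limit X ym1 px py <-> (px = xm /\ py = sm mu1))
  (Hym2 : is_sol xm xp f (G mu2) X ym2 /\
          forall px py, in_alpha_limit X ym2 px py <-> (px = xm /\ py = sm mu2))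
  (* y^+_{mu_i}: the orbit (X, y) has omega-limit set {(xp, sp mu_i)} *)
  (Hyp1 : is_sol xm xp f (G mu1) X yp1 /\
          forall px py, in_omega_limit X yp1 px py <-> (px = xp /\ py = sp mu1))
  (Hyp2 : is_sol xm xp f (G mu2) X yp2 /\
          forall px py, in_omega_limit X yp2 px py <-> (px = xp /\ py = sp mu2)) :
  forall tau : R, ym2 tau <= ym1 tau /\ yp1 tau <= yp2 tau.
Proof.
  intros tau.
  assert (HP := PI_RGT_0).
  destruct (smooth_gy _ (HGs mu1 Hmu1)) as [gy1 [Hd1 Hc1]].
  destruct (smooth_gy _ (HGs mu2 Hmu2)) as [gy2 [Hd2 Hc2]].
  assert (HD1 : forall x s, Derive (G mu1 x) s = gy1 x s) by (intros; apply is_derive_unique; apply Hd1).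
  assert (HD2 : forall x s, Derive (G mu2 x) s = gy2 x s) by (intros; apply is_derive_unique; apply Hd2).
  assert (Xc : forall t, continuity_pt X t) by (intro t; apply (der_cont X t (f (X t))); apply HX).
  assert (Xr : forall t, xm <= X t <= xp) by (intro t; destruct (HX t) as [H _]; lra).
  assert (Xmon : forall t1 t2, t1 <= t2 -> X t1 <= X t2).
  { intros t1 t2 Ht. apply (der_mono X (fun t => f (X t))); auto.
    - intros t _. apply HX.
    - intros t _. left. apply Hfpos. apply HX. }
  assert (Gle : forall x y, xm <= x <= xp -> G mu2 x y <= G mu1 x y).
  { intros x y Hxr. destruct HGmu as [Gmu HGm].
    assert (HI : forall m, mu1 <= m <= mu2 -> inI a b m).
    { intros m Hm. destruct Hmu1 as [Ha1 _]. destruct Hmu2 as [_ Hb2]. split.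
      - apply (Rbar_lt_le_trans a (Finite mu1) (Finite m)); [exact Ha1|simpl; lra].
      - apply (Rbar_le_lt_trans (Finite m) (Finite mu2) b); [simpl; lra|exact Hb2]. }
    apply (der_anti (fun m => G m x y) (fun m => Gmu m x y) mu1 mu2); [lra| |].
    - intros m Hm. apply (HGm m x y (HI m Hm)).
    - intros m Hm. rewrite <- (is_derive_unique _ _ _ (proj1 (HGm m x y (HI m Hm)))).
      apply HM; [apply HI; exact Hm|exact Hxr]. }
  destruct (Hordm mu1 Hmu1) as [Hom1 Hom1'].
  destruct (Hordm mu2 Hmu2) as [Hom2 Hom2'].
  destruct (Hordp mu1 Hmu1) as [Hop1 Hop1'].
  destruct (Hordp mu2 Hmu2) as [Hop2 Hop2'].
  assert (Hc0 : forall s, cong2pi s s) by (intro s; exists 0%Z; simpl; ring).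
  split.
  -
    destruct Hym1 as [Hs1 Ha1]. destruct Hym2 as [Hs2 Ha2].
    assert (Hy1c : forall t, continuity_pt ym1 t) by (intro t; apply (der_cont ym1 t _ (proj2 (proj2 (Hs1 t))))).
    assert (Hy2c : forall t, continuity_pt ym2 t) by (intro t; apply (der_cont ym2 t _ (proj2 (proj2 (Hs2 t))))).
    destruct (alpha_conv X ym1 xm (sm mu1) Hy1c Xmon (fun t => proj1 (Xr t)) Ha1) as [HXl Hl1].
    destruct (alpha_conv X ym2 xm (sm mu2) Hy2c Xmon (fun t => proj1 (Xr t)) Ha2) as [_ Hl2].
    apply (core (G mu1) (G mu2) X ym1 ym2 xm xp xm (sm mu1) (sm mu2) (nm mu1) (nm mu2 - 2 * PI)); auto.
    + lra.
    + intro t. apply (Hs1 t).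
    + intro t. apply (Hs2 t).
    + apply (loc_lip _ gy1); auto.
    + apply (loc_dec _ gy1); auto. rewrite <- HD1. apply Hdsm; auto.
    + lra.
    + apply (neg_on (G mu1 xm) (gy1 xm)); auto.
      * lra.
      * apply Hzm; auto.
      * rewrite <- HD1. apply Hdsm; auto.
      * intros y Hy Hz. apply (Hzm mu1 y Hmu1) in Hz.
        apply (nozero (sm mu1) (nm mu1) y); auto.
    + intros y Hy.
      assert (- G mu2 xm (- - y) < 0); [|rewrite Ropp_involutive in H; lra].
      apply (neg_on (fun z => - G mu2 xm (- z)) (fun z => gy2 xm (- z)) (- sm mu2) (- (nm mu2 - 2 * PI))).
      * lra.
      * intro z. apply (comp_neg (G mu2 xm)). apply Hd2.
      * rewrite Ropp_involutive. assert (G mu2 xm (sm mu2) = 0) by (apply Hzm; auto). lra.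
      * rewrite Ropp_involutive. rewrite <- HD2. apply Hdsm; auto.
      * intros z Hz Hzz. assert (G mu2 xm (- z) = 0) by lra. apply (Hzm mu2 _ Hmu2) in H.
        apply (nozero (sm mu2) (nm mu2) (- z)); auto. right; lra.
      * lra.
    + lra.
    + apply Hzm; auto.
  -
    destruct Hyp1 as [Hs1 Ho1]. destruct Hyp2 as [Hs2 Ho2].
    set (X' := fun t => - X (- t)).
    set (y1' := fun t => - yp1 (- t)).
    set (y2' := fun t => - yp2 (- t)).
    assert (Hy1d : forall t, is_derive y1' t ((fun x y => G mu1 (- x) (- y)) (X' t) (y1' t))).
    { intro t. unfold y1', X'. cbv beta. rewrite !Ropp_involutive. apply (comp_neg yp1). apply Hs1. }
    assert (Hy2d : forall t, is_derive y2' t ((fun x y => G mu2 (- x) (- y)) (X' t) (y2' t))).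
    { intro t. unfold y2', X'. cbv beta. rewrite !Ropp_involutive. apply (comp_neg yp2). apply Hs2. }
    assert (Hy1c : forall t, continuity_pt y1' t) by (intro t; apply (der_cont y1' t _ (Hy1d t))).
    assert (Hy2c : forall t, continuity_pt y2' t) by (intro t; apply (der_cont y2' t _ (Hy2d t))).
    assert (X'c : forall t, continuity_pt X' t).
    { intro t. apply (der_cont X' t (f (X (- t)))). apply (comp_neg X). apply HX. }
    assert (X'r : forall t, - xp <= X' t <= - xm) by (intro t; unfold X'; specialize (Xr (- t)); lra).
    assert (X'mon : forall t1 t2, t1 <= t2 -> X' t1 <= X' t2).
    { intros t1 t2 Ht. unfold X'. specialize (Xmon (- t2) (- t1) ltac:(lra)). lra. }
    destruct (alpha_conv X' y1' (- xp) (- sp mu1) Hy1c X'mon (fun t => proj1 (X'r t))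
       (omega_to_alpha X yp1 xp (sp mu1) Ho1)) as [HXl Hl1].
    destruct (alpha_conv X' y2' (- xp) (- sp mu2) Hy2c X'mon (fun t => proj1 (X'r t))
       (omega_to_alpha X yp2 xp (sp mu2) Ho2)) as [_ Hl2].
    assert (Hshift : forall x, gy1 x (- PI) = gy1 x PI).
    { intro x. assert (Hs : is_derive (fun t => G mu1 x (t + 2 * PI)) (- PI) (gy1 x (- PI + 2 * PI))).
      { assert (Hh : is_derive (fun t : R => t + 2 * PI) (- PI) 1) by (auto_derive; auto).
        assert (H := is_derive_comp (fun t => G mu1 x t) (fun t => t + 2 * PI) (- PI) _ _ (Hd1 x (- PI + 2 * PI)) Hh).
        apply (is_derive_ext _ _ _ _ (fun t => eq_refl)) in H.
        replace (gy1 x (- PI + 2 * PI)) with (scal 1 (gy1 x (- PI + 2 * PI))) by (unfold scal; simpl; unfold mult; simpl; ring).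
        exact H. }
      apply (is_derive_ext _ (fun t => G mu1 x t)) in Hs; [|intro t; apply Hper].
      apply is_derive_unique in Hs. rewrite (is_derive_unique _ _ _ (Hd1 x (- PI))) in Hs.
      replace PI with (- PI + 2 * PI) at 2 by ring. exact Hs. }
    assert (Hnp1 : np mu1 - sp mu1 < 2 * PI).
    { destruct (Rle_lt_or_eq_dec _ _ Hop1') as [|Heq]; [lra|].
      destruct (Rle_lt_or_eq_dec _ _ (proj1 Hop1)) as [|Heq2]; [lra|].
      exfalso. assert (H1 := Hdsp mu1 Hmu1). assert (H2 := Hdnp mu1 Hmu1).
      rewrite HD1 in H1, H2. rewrite Heq in H2. rewrite <- Heq2 in H1. rewrite Hshift in H1. lra. }
    assert (Hfin : forall t, y2' t <= y1' t).
    { apply (core (fun x y => G mu1 (- x) (- y)) (fun x y => G mu2 (- x) (- y)) X' y1' y2'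
        (- xp) (- xm) (- xp) (- sp mu1) (- sp mu2) (2 * PI - np mu1) (- np mu2)); auto.
      + lra.
      + intros x y Hxx. apply Gle. lra.
      + apply lip_neg. unfold LipP. intros x0' y0'. apply (loc_lip (G mu1) gy1); auto.
      + destruct (loc_inc (G mu1) gy1 xp (sp mu1) (Hd1) Hc1) as [d [Hd H]].
        { rewrite <- HD1. apply Hdsp; auto. }
        exists d. split; [exact Hd|]. intros x ya yb Hxx Ha Hb Hyab.
        apply H; try lra.
        * rewrite <- Rabs_Ropp. replace (- (- x - xp)) with (x - - xp) by ring. exact Hxx.
        * rewrite <- Rabs_Ropp. replace (- (- yb - sp mu1)) with (yb - - sp mu1) by ring. exact Hb.
        * rewrite <- Rabs_Ropp. replace (- (- ya - sp mu1)) with (ya - - sp mu1) by ring. exact Ha.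
      + lra.
      + intros y Hy. rewrite Ropp_involutive.
        apply (neg_on (fun z => G mu1 xp (- z)) (fun z => - gy1 xp (- z)) (- sp mu1) (2 * PI - np mu1)); auto.
        * lra.
        * intro z. apply (comp_neg2 (G mu1 xp)). apply Hd1.
        * rewrite Ropp_involutive. apply Hzp; auto.
        * rewrite Ropp_involutive. rewrite <- HD1. assert (H := Hdsp mu1 Hmu1). lra.
        * intros z Hz Hzz. apply (Hzp mu1 _ Hmu1) in Hzz.
          apply (nozero (sp mu1) (np mu1) (- z)); auto. right; lra.
      + intros y Hy. rewrite Ropp_involutive.
        assert (- G mu2 xp (- y) < 0); [|lra].
        apply (neg_on (fun z => - G mu2 xp z) (fun z => - gy2 xp z) (sp mu2) (np mu2)).
        * lra.
        * intro z. apply (opp_der (G mu2 xp)). apply Hd2.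
        * assert (G mu2 xp (sp mu2) = 0) by (apply Hzp; auto). lra.
        * rewrite <- HD2. assert (H := Hdsp mu2 Hmu2). lra.
        * intros z Hz Hzz. assert (G mu2 xp z = 0) by lra. apply (Hzp mu2 _ Hmu2) in H.
          apply (nozero (sp mu2) (np mu2) z); auto.
        * lra.
      + lra.
      + rewrite !Ropp_involutive. apply Hzp; auto. }
    specialize (Hfin (- tau)). unfold y1', y2' in Hfin. rewrite Ropp_involutive in Hfin. lra.
Qed.
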